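(* The monoid $\mathrm{rps}$ does not satisfy any non-trivial identity.
   Context: Let $\mathcal{A}=\{1<2<3<\cdots\}$. An rPS tableau is a finite (possibly empty) sequence of nonempty bottom-justified columns of boxes filled with elements of $\mathcal{A}$, such that the entries of each column are weakly decreasing from top to bottom and the bottom entries of the columns form a strictly increasing sequence from left to right. Right insertion of a symbol $a$ into an rPS tableau $B$: if $a$ is strictly greater than every entry of the bottom row, append a new column consisting of $a$ at the right end; otherwise, let $z$ be the leftmost bottom-row entry with $z\geq a$ and put $a$ in a new box at the bottom of the column of $z$ (the previous entries of that column move up one box). For $w=w_1\cdots w_k$, $\mathfrak{R}_r(w)$ is obtained by starting with the empty tableau and right-inserting $w_1,\dots,w_k$ in order. The monoid $\mathrm{rps}$ is the quotient of $\mathcal{A}^*$ by the congruence $u\equiv v\iff\mathfrak{R}_r(u)=\mathfrak{R}_r(v)$. An identity is a formal equality $u=v$ of words over a countable alphabet of variables; it is non-trivial if $u\neq v$ as words; a monoid $M$ satisfies it if equality holds under every substitution of elements of $M$ for the variables. *)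

(* Defs.v *)
From mathcomp Require Import all_boot.
Set Implicit Arguments. Unset Strict Implicit. Unset Printing Implicit Defensive.

(* Letters of the alphabet A = {1 < 2 < 3 < ...} are positive naturals
   (ordered by the usual order on nat).  A word is a [seq nat]. *)
Definition letter_ok (a : nat) : bool := 0 < a.

(* An rPS tableau is a sequence of columns (left to right); each column is
   stored as a list read from BOTTOM to TOP, so the head of a column is its
   bottom entry.  (Tableaux produced by insertion are always nonempty-column
   rPS tableaux; equality of tableaux is equality of this representation.) *)
Definition tableau := seq (seq nat).

Fixpoint rins (B : tableau) (a : nat) : tableau :=
  match B with
  | [::] => [:: [:: a]]
  | c :: B' => if a <= head a c then (a :: c) :: B' else c :: rins B' a
  end.

Definition Rr (w : seq nat) : tableau := foldl rins [::] w.

(* The monoid rps = A^* / ==, where u == v iff Rr u = Rr v.  Every element of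
   rps is the class of some word over A, and the product of classes is the
   class of the concatenation.  Hence evaluating a word over variables
   (variables are nat) under a substitution of elements of rps amounts to
   choosing a representative word sigma x over A for each variable x and
   concatenating. *)
Definition subst (sigma : nat -> seq nat) (u : seq nat) : seq nat :=
  flatten (map sigma u).

Definition rps_satisfies (u v : seq nat) : Prop :=
  forall sigma : nat -> seq nat,
    (forall x, all letter_ok (sigma x)) ->
    Rr (subst sigma u) = Rr (subst sigma v).

(* Main.v *)
Require Import Defs.
From mathcomp Require Import all_boot.
From mathcomp Require Import zify.

Definition blk (n : nat) : seq nat := rev (iota 1 n).
Definition sig (x y n : nat) (z : nat) : seq nat :=
  if z == x then blk n else if z == y then [:: n.+1] else [::].
Definition Rof (M m : nat) : tableau := if m is 0 then [::] else [:: nseq m M].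
Definition colR (s : seq nat) : tableau := if s is [::] then [::] else [:: s].
Definition duph (c : seq nat) : seq nat := head 0 c :: c.

Fixpoint Tacc (x y a cx : nat) (w : seq nat) : nat :=
  match w with
  | [::] => 0
  | z :: w' => ((z == y) && (cx <= a)) + Tacc x y a (cx + (z == x)) w'
  end.

Lemma iota1S k : iota 1 k.+1 = rcons (iota 1 k) k.+1.
Proof. by rewrite -cats1 -{1}(addn1 k) iotaD add1n. Qed.

Lemma rins_skip L R a :
  all (fun c => 0 < head 0 c < a) L -> rins (L ++ R) a = L ++ rins R a.
Proof.
elim: L => [|c L IH] //= /andP [Hc HL].
case: c Hc => [|h c] //= /andP [_ Hh].
by rewrite leqNgt Hh /= IH.
Qed.

Lemma heads_lt L k a :
  map (head 0) L = iota 1 k -> k < a -> all (fun c => 0 < head 0 c < a) L.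
Proof.
move=> HL ka; apply/allP => c Hc.
have : head 0 c \in iota 1 k by rewrite -HL; apply: map_f.
rewrite mem_iota => /andP [h1 h2]; apply/andP; split; lia.
Qed.

Lemma rins_colR t a : a <= head a t -> rins (colR t) a = colR (a :: t).
Proof. by case: t => [|h t] //= ->. Qed.

Lemma rins_Rof M m : rins (Rof M m) M = Rof M m.+1.
Proof. by case: m => [|m] //=; rewrite leqnn. Qed.

Lemma Rof_colR M m : Rof M m = colR (nseq m M).
Proof. by case: m. Qed.

Lemma phase1 L len lo s :
  all (fun c => 0 < head 0 c < lo) L -> all (fun z => lo + len <= z) s ->
  foldl rins (L ++ colR s) (rev (iota lo len)) = L ++ colR (iota lo len ++ s).
Proof.
elim: len lo => [|len IH] lo HL Hs //=.
have HL' : all (fun c => 0 < head 0 c < lo.+1) L.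
  by apply: sub_all HL => c /andP [h1 h2]; apply/andP; split => //; lia.
have Hs' : all (fun z => lo.+1 + len <= z) s by rewrite addSnnS.
rewrite rev_cons foldl_rcons IH //.
rewrite rins_skip // rins_colR //.
case: len {IH Hs' HL'} Hs => [|len] Hs //=.
case: s Hs => [|z s] //= /andP [Hz _]; lia.
Qed.

Lemma phase2 k L R :
  map (head 0) L = iota 1 k ->
  foldl rins (L ++ R) (rev (iota 1 k)) = map duph L ++ R.
Proof.
elim: k L R => [|k IH] L R.
  by case: L.
have E : iota 1 k.+1 = rcons (iota 1 k) k.+1 by rewrite -cats1 -{1}(addn1 k) iotaD add1n.
rewrite E rev_rcons.
case/lastP: L => [|L c]; first by case: (iota 1 k).
rewrite map_rcons => /eqP; rewrite eqseq_rcons => /andP [/eqP HL /eqP Hc].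
rewrite /= cat_rcons rins_skip; last by apply: (@heads_lt _ _ _ HL).
case: c Hc => [|h c] //= Hh; subst h.
rewrite leqnn IH // map_rcons cat_rcons //.
Qed.

Definition Inv (a : nat) (B : tableau) (cx c : nat) : Prop :=
  exists L m, [/\ B = L ++ Rof a.+2 m, map (head 0) L = iota 1 (minn cx a.+1)
    & c = count_mem a.+2 (flatten L) + (if cx < a.+1 then m else 0)].

Lemma count_duph M L :
  all (fun c => head 0 c != M) L ->
  count_mem M (flatten (map duph L)) = count_mem M (flatten L).
Proof.
elim: L => [|c L IH] //= /andP [Hc HL].
by rewrite !count_cat /= IH // (negbTE Hc).
Qed.

Lemma map_head_duph L : map (head 0) (map duph L) = map (head 0) L.
Proof. by elim: L => [|c L IH] //=; rewrite IH. Qed.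

Lemma heads_neq L k M :
  map (head 0) L = iota 1 k -> k < M -> all (fun c => head 0 c != M) L.
Proof.
move=> HL kM; have /allP H := @heads_lt L k M HL kM.
apply/allP => c /H /andP [_ h].
by rewrite neq_ltn h.
Qed.

Lemma step_inv x y a z B cx c : x != y -> Inv a B cx c ->
  Inv a (foldl rins B (sig x y a.+1 z)) (cx + (z == x))
        (c + ((z == y) && (cx <= a))).
Proof.
move=> xy [L [m [-> HL ->]]].
rewrite /sig.
case: (eqVneq z x) => [zx|zx].
  subst z; rewrite (negbTE xy) /= addn0 addn1 /blk.
  case: (ltnP cx a.+1) => Hcx.
  - have Hmin : minn cx a.+1 = cx by lia.
    rewrite Hmin in HL.
    have E : iota 1 a.+1 = iota 1 cx ++ iota (1 + cx) (a.+1 - cx).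
      by rewrite -iotaD; congr iota; lia.
    rewrite E rev_cat foldl_cat Rof_colR phase1; last first.
    - apply/allP => z; rewrite mem_nseq => /andP [_ /eqP ->]; lia.
    - by apply: (@heads_lt _ _ _ HL); lia.
    have [j Hj] : exists j, a.+1 - cx = j.+1 by exists (a - cx); lia.
    rewrite Hj /=.
    set col := (cx.+1 :: iota cx.+2 j ++ nseq m a.+2).
    rewrite phase2 //.
    exists (rcons (map duph L) col), 0; split.
    + by rewrite cats0 cats1.
    + rewrite map_rcons map_head_duph HL /=.
      have -> : minn cx.+1 a.+1 = cx.+1 by lia.
      by rewrite iota1S.
    + rewrite -cats1 flatten_cat count_cat count_duph; last first.
        by apply: (@heads_neq _ _ _ HL); lia.
      rewrite /= cats0 count_cat count_nseq /= eqxx mul1n.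
      have -> : count_mem a.+2 (iota cx.+2 j) = 0.
        apply/count_memPn; rewrite mem_iota; lia.
      have -> : (cx.+1 == a.+2) = false by lia.
      by case: ifP => _; rewrite /= ?addn0.
  - have Hmin : minn cx a.+1 = a.+1 by lia.
    rewrite Hmin in HL.
    rewrite phase2 //.
    exists (map duph L), m; split => //.
    + by rewrite map_head_duph HL; congr iota; lia.
    + rewrite count_duph; last by apply: (@heads_neq _ _ _ HL); lia.
      have -> : cx.+1 < a.+1 = false by lia.
      by [].
case: (eqVneq z y) => [zy|zy]; last first.
  rewrite /= !addn0; exists L, m; split => //.
subst z; rewrite /= addn0.
exists L, m.+1; split => //.
  rewrite rins_skip ?rins_Rof //; apply: (@heads_lt _ _ _ HL); lia.
rewrite ltnS; case: (cx <= a) => /=; rewrite ?addn0 ?addn1 ?addnS //.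
Qed.

Lemma stat_inv a B cx c : Inv a B cx c ->
  count_mem a.+2 (flatten (take a.+1 B)) = c.
Proof.
move=> [L [m [-> HL ->]]].
have HsL : size L = minn cx a.+1 by rewrite -(size_map (head 0)) HL size_iota.
case: (ltnP cx a.+1) => Hcx.
- rewrite take_oversize; last first.
    rewrite size_cat HsL; case: m => [|m] /=; lia.
  rewrite flatten_cat count_cat; congr addn.
  by case: m => [|m] //=; rewrite cats0 count_nseq /= eqxx mul1n.
- rewrite take_size_cat; last by rewrite HsL; lia.
  by rewrite addn0.
Qed.

Lemma foldl_flatten (f : tableau -> nat -> tableau) (g : nat -> seq nat) (B : tableau) (w : seq nat) :
  foldl f B (flatten (map g w)) = foldl (fun B z => foldl f B (g z)) B w.
Proof. by elim: w B => [|z w IH] B //=; rewrite foldl_cat IH. Qed.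

Lemma sim_inv x y a w B cx c : x != y -> Inv a B cx c ->
  Inv a (foldl (fun B z => foldl rins B (sig x y a.+1 z)) B w)
        (cx + count_mem x w) (c + Tacc x y a cx w).
Proof.
move=> xy; elim: w B cx c => [|z w IH] B cx c H /=.
  by rewrite !addn0.
have := IH _ _ _ (@step_inv x y a z B cx c xy H).
by rewrite !addnA.
Qed.

Lemma Tacc_cat x y a cx p s :
  Tacc x y a cx (p ++ s) = Tacc x y a cx p + Tacc x y a (cx + count_mem x p) s.
Proof.
elim: p cx => [|z p IH] cx /=; first by rewrite addn0.
by rewrite IH addnA !addnA.
Qed.

Lemma Tacc_big x y a cx w : a < cx -> Tacc x y a cx w = 0.
Proof.
elim: w cx => [|z w IH] cx H //=.
rewrite IH; last by lia.
have -> : (cx <= a) = false by lia.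
by rewrite andbF.
Qed.

Lemma core p y t s :
  (if s is x0 :: _ then x0 != y else true) ->
  exists sigma : nat -> seq nat, (forall z, all letter_ok (sigma z)) /\
    Rr (subst sigma (p ++ s)) <> Rr (subst sigma (p ++ y :: t)).
Proof.
move=> Hs.
have [x [xy Hx]] : exists x, x != y /\ (forall a', Tacc x y a' a' s = 0).
  case: s Hs => [|x0 s] Hs.
    by exists y.+1; split => //; lia.
  exists x0; split => // a' /=.
  by rewrite (negbTE Hs) /= Tacc_big //; lia.
pose a := count_mem x p.
exists (sig x y a.+1); split.
  move=> z; rewrite /sig; case: ifP => _.
    rewrite /blk all_rev; apply/allP => q; rewrite mem_iota /letter_ok; lia.
  by case: ifP.
have I0 : Inv a [::] 0 0 by exists [::], 0.
have S w : count_mem a.+2 (flatten (take a.+1 (Rr (subst (sig x y a.+1) w))))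
           = Tacc x y a 0 w.
  apply: stat_inv.
  rewrite /Rr /subst foldl_flatten.
  by have := @sim_inv x y a w [::] 0 0 xy I0; rewrite add0n; apply.
move=> E.
have := S (p ++ s); rewrite E S !Tacc_cat /= add0n -/a leqnn eqxx /=.
rewrite Hx; lia.
Qed.

Lemma decomp (u v : seq nat) : u <> v ->
  exists p y t s, is_true (if s is x0 :: _ then x0 != y else true) /\
    ((u = p ++ s /\ v = p ++ y :: t) \/ (v = p ++ s /\ u = p ++ y :: t)).
Proof.
elim: u v => [|a u IH] [|b v] H //.
- by exists [::], b, v, [::]; split => //; left.
- by exists [::], a, u, [::]; split => //; right.
- case: (eqVneq a b) => [ab|ab].
    subst b; have H' : u <> v by move=> E; apply: H; rewrite E.
    have [p [y [t [s [Hs [[-> ->]|[-> ->]]]]]]] := IH v H'.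
      by exists (a :: p), y, t, s; split => //; left.
    by exists (a :: p), y, t, s; split => //; right.
  by exists [::], b, v, (a :: u); split => //; left.
Qed.

Theorem theorem4p9 : forall u v : seq nat, u <> v -> ~ rps_satisfies u v.
Proof.
move=> u v /decomp [p [y [t [s [Hs [[-> ->]|[-> ->]]]]]]] Hsat;
  have [sigma [Hok Hne]] := @core p y t s Hs; apply: Hne.
- exact: Hsat.
- by rewrite (Hsat sigma Hok).
Qed.
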